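(* Let $A$ be a sincere Nakayama algebra over an algebraically closed field $K$ with $n$ simple modules. Then $A$ has finite global dimension if and only if $A$ has a unique (up to isomorphism) indecomposable projective module of dimension $n$, i.e. exactly one index $i$ with $c_i=n$ in its Kupisch series. Moreover, for such algebras of finite global dimension, after cyclically rotating the Kupisch series so that $c_0=n$, the map sending $A$ with Kupisch series $[c_0,\dots,c_{n-1}]$ to the Dyck path $D$ with area sequence \[ [c_1-n+1,\ c_2-n+1,\ \dots,\ c_{n-1}-n+1,\ 1] \] is a bijection between (isomorphism classes of) sincere Nakayama algebras of finite global dimension with $n$ simple modules and Dyck paths of semilength $n-1$. Furthermore, \[ \operatorname{gldim} A = 2\cdot b_D, \] where $b_D$ is the bounce count of $D$.
   Context: Nakayama algebras are connected finite-dimensional algebras all of whose indecomposable modules are uniserial; they are given as bound quiver algebras $KQ/I$ with $Q$ the linear quiver $0\to1\to\cdots\to n-1$ or the cyclic quiver $0\to1\to\cdots\to n-1\to 0$ and $I$ admissible. Such an algebra is determined up to isomorphism by its Kupisch series $[c_0,\dots,c_{n-1}]$, $c_i=\dim_K e_iA$ (indices extended mod $n$); for cyclic ones, Kupisch series are exactly the sequences with $c_{i+1}+1\ge c_i\ge 2$ for all $i$ (indices mod $n$), and cyclic rotations of the Kupisch series give isomorphic algebras. An algebra is sincere if every indecomposable projective module has every simple module as a composition factor. A Dyck path of semilength $m$ is a lattice path from $(0,0)$ to $(2m,0)$ with steps $(1,1),(1,-1)$ never going below the $x$-axis. Its area sequence $[c_0,\dots,c_m]$ is defined by letting $c_k$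 be the largest integer such that $(2k+c_k-1,c_k-1)$ lies on the path; area sequences of Dyck paths of semilength $m$ are exactly the sequences with $c_{i+1}+1\ge c_i\ge 2$ for $0\le i\le m-1$ and $c_m=1$. The bounce path of a Dyck path with area sequence $[c_0,\dots,c_m]$: set $b_0=0$ and $b_{t+1}=b_t+c_{b_t}-1$ (from $(2b_t,0)$ the bounce path takes $c_{b_t}-1$ up steps then $c_{b_t}-1$ down steps, arriving at $(2b_{t+1},0)$); the bounce count $b_D$ is the number $d$ of steps until $b_d=m$. *)

(* Defs.v *)
(* Nakayama algebras are modelled by their Kupisch series. *)
From mathcomp Require Import all_boot.
Set Implicit Arguments. Unset Strict Implicit. Unset Printing Implicit Defensive.

Definition kc (n : nat) (c : seq nat) (i : nat) : nat := nth 0 c (i %% n).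

(* cyclic quiver 0 -> 1 -> ... -> n-1 -> 0 *)
Definition kupisch_cyclic (n : nat) (c : seq nat) : Prop :=
  size c = n /\ forall i, i < n -> 2 <= kc n c i /\ kc n c i <= kc n c i.+1 + 1.

(* linear quiver 0 -> 1 -> ... -> n-1 *)
Definition kupisch_linear (n : nat) (c : seq nat) : Prop :=
  size c = n /\ nth 0 c n.-1 = 1 /\
  forall i, i < n.-1 -> 2 <= nth 0 c i /\ nth 0 c i <= nth 0 c i.+1 + 1.

Definition nakayama (n : nat) (c : seq nat) : Prop :=
  0 < n /\ (kupisch_cyclic n c \/ kupisch_linear n c).

(* isomorphism of Nakayama algebras = cyclic rotation of the Kupisch series *)
Definition nak_iso (n : nat) (c c' : seq nat) : Prop :=
  exists k, k < n /\ c' = rot k c.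

(* Indecomposable modules: uniserial M(i,l) with top S_i, length l,
   1 <= l <= c_i, composition factors S_i, S_{i+1}, ..., S_{i+l-1} (mod n).
   The projective P_i = e_i A is M(i, c_i). *)
Definition indec (n : nat) (c : seq nat) (M : nat * nat) : Prop :=
  M.1 < n /\ 0 < M.2 /\ M.2 <= kc n c M.1.

(* S_j is a composition factor of P_i *)
Definition comp_factor_proj (n : nat) (c : seq nat) (i j : nat) : Prop :=
  exists t, t < kc n c i /\ (i + t) %% n = j.

Definition sincere (n : nat) (c : seq nat) : Prop :=
  forall i j, i < n -> j < n -> comp_factor_proj n c i j.

(* syzygy (kernel of the projective cover P_i -> M(i,l));  None = zero module *)
Definition syz (n : nat) (c : seq nat) (M : nat * nat) : option (nat * nat) :=
  if M.2 < kc n c M.1 then Some ((M.1 + M.2) %% n, kc n c M.1 - M.2) else None.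

Definition omega (n : nat) (c : seq nat) (k : nat) (M : nat * nat) : option (nat * nat) :=
  iter k (fun o => obind (syz n c) o) (Some M).

(* pd M <= d  iff  Omega^(d+1) M = 0 *)
Definition pdim_le (n : nat) (c : seq nat) (M : nat * nat) (d : nat) : Prop :=
  omega n c d.+1 M = None.

Definition gldim_le (n : nat) (c : seq nat) (d : nat) : Prop :=
  forall M, indec n c M -> pdim_le n c M d.

Definition finite_gldim (n : nat) (c : seq nat) : Prop := exists d, gldim_le n c d.

Definition is_gldim (n : nat) (c : seq nat) (g : nat) : Prop :=
  gldim_le n c g /\ forall d, gldim_le n c d -> g <= d.

(* a path is a list of steps: true = (1,1), false = (1,-1) *)
Definition height (p : seq bool) (j : nat) : nat :=
  count id (take j p) - count negb (take j p).

Definition dyck (m : nat) (p : seq bool) : Prop :=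
  size p = (2 * m)%N /\
  (forall j, j <= 2 * m -> count negb (take j p) <= count id (take j p)) /\
  count id p = count negb p.

Definition on_path (p : seq bool) (x y : nat) : bool :=
  (x <= size p) && (height p x == y).

Definition area_seq (p : seq bool) : seq nat :=
  let m := (size p %/ 2)%N in
  [seq \max_(1 <= t < (2 * m).+2 | on_path p (2 * k + t - 1) (t - 1)) t
  | k <- iota 0 m.+1].

Definition bounce_step (a : seq nat) (b : nat) : nat := b + nth 0 a b - 1.

Definition bounce_count (p : seq bool) : nat :=
  let m := (size p %/ 2)%N in
  let a := area_seq p in
  find (fun d => iter d (bounce_step a) 0 == m) (iota 0 m.+1).

Definition nak_to_area (n : nat) (c : seq nat) : seq nat :=
  [seq x - n.-1 | x <- behead c] ++ [:: 1].

(* representatives of the iso classes considered: sincere, finite gldim, c_0 = n *)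
Definition normalized (n : nat) (c : seq nat) : Prop :=
  nakayama n c /\ sincere n c /\ finite_gldim n c /\ nth 0 c 0 = n.

(* Main.v *)
Require Import Defs.
From mathcomp Require Import all_boot zify.
Set Implicit Arguments. Unset Strict Implicit. Unset Printing Implicit Defensive.

Lemma iter_obind_None n c k : iter k (fun o => obind (syz n c) o) None = None.
Proof. by elim: k => //= k ->. Qed.

Lemma omegaS n c k M : omega n c k.+1 M = obind (syz n c) (omega n c k M).
Proof. by rewrite /omega iterS. Qed.

Lemma omegaSr n c k M : omega n c k.+1 M =
  if syz n c M is Some M' then omega n c k M' else None.
Proof. rewrite /omega iterSr /=. case: (syz n c M) => //; exact: iter_obind_None. Qed.

Lemma omega_None_le n c k k' M : k <= k' -> omega n c k M = None -> omega n c k' M = None.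
Proof.
move=> /subnK <- H; elim: (k' - k) => [|j IH] //.
by rewrite addSn omegaS IH.
Qed.

Lemma omega_measure n c (P : nat * nat -> Prop) (B : nat * nat -> nat) :
  (forall M, P M -> syz n c M = None \/ exists M', syz n c M = Some M' /\ P M' /\ B M' < B M) ->
  forall M, P M -> omega n c (B M).+1 M = None.
Proof.
move=> H.
suff S : forall b M, B M <= b -> P M -> omega n c b.+1 M = None.
  by move=> M PM; apply: S.
elim=> [|b IH] M HB PM; rewrite omegaSr;
  (case: (H M PM) => [->|[M' [-> [PM' Hlt]]]] //).
- by move: Hlt; rewrite ltnNge (leq_trans HB (leq0n _)).
- apply: IH => //; lia.
Qed.

Lemma omega_inf n c (Q : nat*nat -> Prop) :
  (forall M, Q M -> exists M', syz n c M = Some M' /\ Q M') ->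
  forall M, Q M -> forall k, exists M', omega n c k M = Some M' /\ Q M'.
Proof.
move=> H M QM; elim=> [|k [M' [E QM']]]; first by exists M.
case: (H M' QM') => M'' [E' Q'']; exists M''; by rewrite omegaS E /= E'.
Qed.

Definition goodK n c := size c = n /\ (forall i, n <= kc n c i) /\
  (forall i, kc n c i <= kc n c i.+1 + 1).

Lemma kc_mod n c i : kc n c (i %% n) = kc n c i.
Proof. by rewrite /kc modn_mod. Qed.

Lemma kc_addn n c i : kc n c (i + n) = kc n c i.
Proof. by rewrite /kc modnDr. Qed.

Lemma kcS_mod n c i : kc n c (i %% n).+1 = kc n c i.+1.
Proof. by rewrite /kc -[(i %% n).+1]addn1 -[i.+1]addn1 modnDml. Qed.

Lemma sincere_ge n c i : 0 < n -> sincere n c -> n <= kc n c i.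
Proof.
move=> n0 S. rewrite -kc_mod. have ilt : i %% n < n by rewrite ltn_pmod.
have [t [ht E]] := S _ ((i %% n + n.-1) %% n) ilt (ltn_pmod _ n0).
rewrite leqNgt; apply/negP => hlt.
have tn : t < n.-1 by clear E; lia.
have : t %% n = n.-1 %% n.
  apply/eqP. rewrite -(eqn_modDl (i %% n)). apply/eqP. by rewrite E.
clear E; rewrite (modn_small (m := t)); last lia.
rewrite modn_small; lia.
Qed.

Lemma good_of n c : nakayama n c -> sincere n c -> goodK n c.
Proof.
move=> [n0 [[sz H]|[sz [Hl _]]]] S.
- split=> //; split=> i; first exact: sincere_ge.
  rewrite -kc_mod -kcS_mod. have := H (i %% n) (ltn_pmod _ n0). by case.
- have n1 : n = 1.
    have [t [ht E]] := S n.-1 0 (ltac:(lia)) n0.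
    move: ht E; rewrite /kc (modn_small (m := n.-1)); last lia.
    rewrite Hl => t0. have -> : t = 0 by lia. rewrite addn0 modn_small; lia.
  subst n. split=> //; rewrite /kc n1 /= in Hl *; split=> i; rewrite !modn1 Hl //.
Qed.

Definition Gf n c x := x + kc n c x - n.
Definition Tf n c x := find (fun d => iter d (Gf n c) x == n) (iota 0 n).

Lemma e_mono n c : goodK n c -> {homo (fun x => x + kc n c x) : x y / x <= y}.
Proof.
move=> [_ [_ H]]; apply: homo_leq => [//|y x z|i]; first exact: leq_trans.
have := H i; lia.
Qed.


Lemma G_mono n c x y : goodK n c -> x <= y -> Gf n c x <= Gf n c y.
Proof. move=> g xy; rewrite /Gf leq_sub2r //; exact: e_mono. Qed.

Lemma G_ge n c x : goodK n c -> x <= Gf n c x.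
Proof. move=> [_ [H _]]; have := H x; rewrite /Gf; lia. Qed.

Lemma kc_n n c : kc n c n = kc n c 0.
Proof. by rewrite /kc modnn mod0n. Qed.

Lemma G_n n c : kc n c 0 = n -> Gf n c n = n.
Proof. by move=> H; rewrite /Gf kc_n H addnK. Qed.

Lemma G_le n c x : goodK n c -> kc n c 0 = n -> x <= n -> Gf n c x <= n.
Proof. move=> g H xn; rewrite -{2}(G_n H); exact: G_mono. Qed.

Lemma G_gt n c x : goodK n c -> (forall i, 0 < i < n -> kc n c i != n) ->
  0 < x < n -> x < Gf n c x.
Proof.
move=> [_ [H _]] U xn; have := H x; have := U x xn; rewrite /Gf.
move=> /eqP ne ge; lia.
Qed.

Lemma iterG_le n c k x : goodK n c -> kc n c 0 = n -> x <= n -> iter k (Gf n c) x <= n.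
Proof. move=> g H xn; elim: k => //= k IH; exact: G_le. Qed.

Lemma iterG_mono n c k x y : goodK n c -> x <= y -> iter k (Gf n c) x <= iter k (Gf n c) y.
Proof. move=> g xy; elim: k => //= k IH; exact: G_mono. Qed.

Lemma iterG_ge n c k x : goodK n c -> x <= iter k (Gf n c) x.
Proof. move=> g; elim: k => //= k IH; apply: (leq_trans IH); exact: G_ge. Qed.

Lemma iterG_lb n c k x : goodK n c -> kc n c 0 = n ->
  (forall i, 0 < i < n -> kc n c i != n) ->
  0 < x <= n -> minn n (x + k) <= iter k (Gf n c) x.
Proof.
move=> g H U xn; elim: k => [|k IH] /=; first lia.
have yl := iterG_le k g H (proj2 (andP xn)).
set y := iter k (Gf n c) x in IH yl *.
have [->|yn] := eqVneq y n; first by rewrite G_n //; lia.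
have := G_gt g U (x := y); lia.
Qed.

Lemma iter_n n c x : goodK n c -> kc n c 0 = n ->
  (forall i, 0 < i < n -> kc n c i != n) ->
  0 < x <= n -> iter n.-1 (Gf n c) x = n.
Proof.
move=> g H U xn; have := iterG_lb n.-1 g H U xn.
have := iterG_le n.-1 g H (proj2 (andP xn)); lia.
Qed.

Lemma find_iota_le (P : pred nat) N k : k < N -> P k -> find P (iota 0 N) <= k.
Proof.
move=> kN Pk; rewrite leqNgt; apply/negP => h.
by have := before_find 0 h; rewrite nth_iota // add0n Pk.
Qed.

Lemma T_spec n c x : goodK n c -> kc n c 0 = n ->
  (forall i, 0 < i < n -> kc n c i != n) ->
  0 < x <= n -> Tf n c x < n /\ iter (Tf n c x) (Gf n c) x = n.
Proof.
move=> g H U xn.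
have hs : has (fun d => iter d (Gf n c) x == n) (iota 0 n).
  apply/hasP; exists n.-1; first by rewrite mem_iota; lia.
  by rewrite iter_n.
split; first by move: hs; rewrite has_find size_iota.
have := nth_find 0 hs; rewrite nth_iota; first by move/eqP.
by move: hs; rewrite has_find size_iota.
Qed.

Lemma T_min n c x k : k < Tf n c x -> iter k (Gf n c) x != n.
Proof.
move=> h; have := before_find 0 h; rewrite nth_iota ?add0n => [->//|].
apply: (leq_trans h); rewrite -{2}(size_iota 0 n); exact: find_size.
Qed.

Lemma T_le n c x k : goodK n c -> kc n c 0 = n ->
  (forall i, 0 < i < n -> kc n c i != n) ->
  0 < x <= n -> iter k (Gf n c) x = n -> Tf n c x <= k.
Proof.
move=> g H U xn E; case: (ltnP k n) => kn.
- by apply: find_iota_le => //; rewrite E.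
- have := T_spec g H U xn; lia.
Qed.

Lemma T_anti n c x y : goodK n c -> kc n c 0 = n ->
  (forall i, 0 < i < n -> kc n c i != n) ->
  0 < x -> x <= y -> y <= n -> Tf n c y <= Tf n c x.
Proof.
move=> g H U x0 xy yn; apply: T_le => //; first lia.
have [_ E] := T_spec g H U (x := x) (ltac:(lia)).
have := iterG_mono (Tf n c x) g xy; have := iterG_le (Tf n c x) g H yn; lia.
Qed.

Lemma T_n n c : goodK n c -> kc n c 0 = n ->
  (forall i, 0 < i < n -> kc n c i != n) -> 0 < n -> Tf n c n = 0.
Proof. move=> g H U n0; have := T_le (k := 0) g H U (x := n) (ltac:(lia)) erefl; lia. Qed.

Lemma T_pos n c x : goodK n c -> kc n c 0 = n ->
  (forall i, 0 < i < n -> kc n c i != n) -> 0 < x < n -> 0 < Tf n c x.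
Proof.
move=> g H U xn; have [_ E] := T_spec g H U (x := x) (ltac:(lia)).
move: E; case: (Tf n c x) => //= E; lia.
Qed.

Lemma T_G n c x : goodK n c -> kc n c 0 = n ->
  (forall i, 0 < i < n -> kc n c i != n) -> 0 < x < n ->
  Tf n c x = (Tf n c (Gf n c x)).+1.
Proof.
move=> g H U xn.
have gx := G_ge x g; have gl := G_le g H (x := x) (ltac:(lia)).
have tp := T_pos g H U xn.
have [_ Ex] := T_spec g H U (x := x) (ltac:(lia)).
have [_ Ey] := T_spec g H U (x := Gf n c x) (ltac:(lia)).
apply/eqP; rewrite eqn_leq; apply/andP; split.
- apply: T_le => //; first lia. by rewrite iterSr.
- rewrite -(prednK tp) ltnS; apply: T_le => //; first lia.
  by rewrite -iterSr prednK.
Qed.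

Definition PB n c (M : nat * nat) :=
  if M.1 == 0 then 2 * Tf n c M.2 else if M.1 + M.2 <= n then (2 * Tf n c M.1).-1
  else 2 * maxn (Tf n c (M.1 + M.2 - n)) (Tf n c M.1).-1.

Lemma syz_indec n c M : 0 < n -> goodK n c -> indec n c M ->
  forall M', syz n c M = Some M' -> indec n c M'.
Proof.
case: M => i l n0 g [/= hi [hl hlc]] M'; rewrite /syz /=.
case: ltnP => // hlt [<-]; split; first exact: ltn_pmod.
rewrite /= kc_mod; split; first lia.
have := e_mono g (leq_addr l i); rewrite /=; lia.
Qed.

Lemma mod_sub n x : n <= x < n + n -> x %% n = x - n.
Proof.
move=> h; rewrite -{1}(subnK (proj1 (andP h))) modnDr modn_small //; lia.
Qed.

Lemma PB_dec n c : 0 < n -> goodK n c -> kc n c 0 = n ->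
  (forall i, 0 < i < n -> kc n c i != n) ->
  forall M, indec n c M -> syz n c M = None \/
    exists M', syz n c M = Some M' /\ indec n c M' /\ PB n c M' < PB n c M.
Proof.
move=> n0 g H U M HM.
case E: (syz n c M) => [M'|]; last by left.
right; exists M'; split=> //; split; first exact: (syz_indec n0 g HM).
move: HM E; case: M => i l [/= hi [hl hlc]]; rewrite /syz /=.
case: ltnP => // hlt [<-].
have kge : n <= kc n c i by case: g => _ [].
rewrite /PB /=.
have [i0|i0] := eqVneq i 0.
- subst i. rewrite H in hlt *. rewrite add0n modn_small //.
  have lpos : l != 0 by lia.
  rewrite (negbTE lpos) subnKC; last lia. rewrite leqnn.
  have := T_pos g H U (x := l) (ltac:(lia)). lia.
- idtac.
  have gi := G_le g H (x := i) (ltac:(lia)).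
  have gg := G_gt g U (x := i) (ltac:(lia)).
  have [iln|iln] := leqP (i + l) n.
  + idtac.
    have tg := T_G g H U (x := i) (ltac:(lia)).
    have [ieq|ilt] := eqVneq (i + l) n.
    * rewrite ieq modnn eqxx.
      have -> : kc n c i - l = Gf n c i by rewrite /Gf; lia.
      lia.
    * rewrite modn_small; last lia.
      have -> : (i + l == 0) = false by lia.
      have -> : (i + l + (kc n c i - l) <= n) = false by lia.
      have -> : i + l + (kc n c i - l) - n = Gf n c i by rewrite /Gf; lia.
      have := T_anti g H U (x := i) (y := i + l) (ltac:(lia)) (ltac:(lia)) iln.
      have := T_pos g H U (x := i) (ltac:(lia)). lia.
  + have ge : i + l < n + n by move: gi; rewrite /Gf; lia.
    rewrite (mod_sub (x := i + l)); last lia.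
    have -> : (i + l - n == 0) = false by lia.
    have -> : (i + l - n + (kc n c i - l) <= n) = true by move: gi; rewrite /Gf; lia.
    have := T_pos g H U (x := i + l - n) (ltac:(move: gi; rewrite /Gf; lia)).
    lia.
Qed.

Lemma PB_bound n c M : 0 < n -> goodK n c -> kc n c 0 = n ->
  (forall i, 0 < i < n -> kc n c i != n) ->
  indec n c M -> PB n c M <= 2 * Tf n c 1.
Proof.
move=> n0 g H U; case: M => i l [/= hi [hl hlc]]; rewrite /PB /=.
have [i0|i0] := eqVneq i 0.
- subst i; rewrite H in hlc.
  have := T_anti g H U (x := 1) (y := l) erefl hl hlc; lia.
- have := T_anti g H U (x := 1) (y := i) erefl (ltac:(lia)) (ltac:(lia)).
  move=> t1; case: ifP => hh.
  + lia.
  + have gi := G_le g H (x := i) (ltac:(lia)).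
    have := T_anti g H U (x := 1) (y := i + l - n) erefl (ltac:(lia))
      (ltac:(move: gi; rewrite /Gf; lia)).
    lia.
Qed.

Lemma lower_omega n c k : 0 < n -> goodK n c -> kc n c 0 = n ->
  (forall i, 0 < i < n -> kc n c i != n) -> k <= Tf n c 1 ->
  omega n c (2 * k) (0, 1) = Some (0, iter k (Gf n c) 1).
Proof.
move=> n0 g H U; elim: k => [//|k IH] hk.
have := IH (ltnW hk) => {}IH.
have hne := T_min (ltac:(lia) : k < Tf n c 1).
have yl := iterG_le k g H (x := 1) (ltac:(lia)).
have yg := iterG_ge k 1 g.
set y := iter k (Gf n c) 1 in hne yl yg IH *.
have -> : 2 * k.+1 = (2 * k).+2 by lia.
rewrite !omegaS IH /= /syz /= H.
have ylt : y < n by lia.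
rewrite ylt /= add0n modn_small //.
have kge : n <= kc n c y by case: g => _ [].
have -> : n - y < kc n c y by lia.
rewrite subnKC ?modnn; last lia. rewrite -/y /Gf; congr (Some (_, _)); lia.
Qed.

Lemma main_gldim n c : 0 < n -> goodK n c -> kc n c 0 = n ->
  (forall i, 0 < i < n -> kc n c i != n) ->
  is_gldim n c (2 * Tf n c 1).
Proof.
move=> n0 g H U; split.
- move=> M HM; rewrite /pdim_le.
  apply: (omega_None_le (k := (PB n c M).+1)).
    by have := PB_bound n0 g H U HM; lia.
  exact: (omega_measure (P := indec n c) (B := PB n c) (PB_dec n0 g H U)).
- move=> d Hd; rewrite leqNgt; apply/negP => hlt.
  have HM : indec n c (0, 1) by rewrite /indec /= H.
  have := Hd _ HM; rewrite /pdim_le => E.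
  have := omega_None_le (k := d.+1) (k' := 2 * Tf n c 1) hlt E.
  by rewrite (lower_omega n0 g H U (leqnn _)).
Qed.

Lemma nth_rot_mod (s : seq nat) k i : k <= size s -> i < size s ->
  nth 0 (rot k s) i = nth 0 s ((k + i) %% size s).
Proof.
move=> ks iS; rewrite /rot nth_cat size_drop nth_drop.
case: ltnP => h.
- by rewrite modn_small //; lia.
- rewrite nth_take; last lia.
  rewrite mod_sub; last lia. congr nth; lia.
Qed.

Lemma kc_rot n c k i : 0 < n -> size c = n -> k < n ->
  kc n (rot k c) i = kc n c (i + k).
Proof.
move=> n0 sz kn; rewrite /kc nth_rot_mod ?size_rot sz; [|lia|exact: ltn_pmod].
by rewrite addnC modnDml.
Qed.

Lemma goodK_rot n c k : 0 < n -> k < n -> goodK n c -> goodK n (rot k c).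
Proof.
move=> n0 kn [sz [H1 H2]]; split; first by rewrite size_rot.
by split=> i; rewrite !kc_rot // addSn.
Qed.

Definition phi n k (M : nat * nat) := ((M.1 + k) %% n, M.2).

Lemma syz_rot n c k M : 0 < n -> size c = n -> k < n ->
  syz n c (phi n k M) = omap (phi n k) (syz n (rot k c) M).
Proof.
move=> n0 sz kn; case: M => i l; rewrite /syz /phi /= kc_mod kc_rot //.
case: ifP => //= _; congr (Some (_, _)).
by rewrite !modnDml addnAC.
Qed.

Lemma omega_rot n c k j M : 0 < n -> size c = n -> k < n ->
  omega n c j (phi n k M) = omap (phi n k) (omega n (rot k c) j M).
Proof.
move=> n0 sz kn; elim: j => [//|j IH]; rewrite !omegaS IH.
case: (omega n (rot k c) j M) => //= M'; exact: syz_rot.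
Qed.

Lemma gldim_rot n c k d : 0 < n -> size c = n -> k < n ->
  gldim_le n c d <-> gldim_le n (rot k c) d.
Proof.
move=> n0 sz kn; split=> H M HM.
- have HM' : indec n c (phi n k M).
    case: M HM => i l [/= hi [hl hlc]]; split; first exact: ltn_pmod.
    by rewrite /= kc_mod -kc_rot.
  have := H _ HM'; rewrite /pdim_le omega_rot //.
  by case: (omega n (rot k c) d.+1 M).
- case: M HM => j l [/= hj [hl hlc]].
  pose i := (j + (n - k)) %% n.
  have E : phi n k (i, l) = (j, l).
    rewrite /phi /= /i modnDml -addnA subnK; last lia.
    by rewrite modnDr modn_small.
  have HM' : indec n (rot k c) (i, l).
    split; first exact: ltn_pmod.
    split=> //=; rewrite kc_rot // -kc_mod.
    by move: E; rewrite /phi /= => -[->].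
  have := H _ HM'; rewrite /pdim_le -E omega_rot // => ->.
  by [].
Qed.

Lemma is_gldim_rot n c k d : 0 < n -> size c = n -> k < n ->
  is_gldim n (rot k c) d -> is_gldim n c d.
Proof.
move=> n0 sz kn [H1 H2]; split; first by apply/(gldim_rot d n0 sz kn).
by move=> d' /(gldim_rot d' n0 sz kn); apply: H2.
Qed.

Lemma count_rot (s : seq nat) k x : count_mem x (rot k s) = count_mem x s.
Proof. by apply/permP; rewrite perm_rot. Qed.

Lemma two_occ (s : seq nat) i j x : i < j < size s -> nth 0 s i = x -> nth 0 s j = x ->
  1 < count_mem x s.
Proof.
move=> ij Ei Ej; rewrite -(cat_take_drop j s) count_cat.
have h1 : 0 < count_mem x (take j s).
  rewrite -has_count; apply/hasP; exists x; last exact: eqxx.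
  rewrite -Ei -(nth_take 0 (n0 := j) (proj1 (andP ij))).
  apply: mem_nth; rewrite size_take (proj2 (andP ij)); exact: (proj1 (andP ij)).
have h2 : 0 < count_mem x (drop j s).
  rewrite -has_count; apply/hasP; exists x; last exact: eqxx.
  have -> : x = nth 0 (drop j s) 0 by rewrite nth_drop addn0.
  apply: mem_nth; rewrite size_drop subn_gt0; exact: (proj2 (andP ij)).
lia.
Qed.

Lemma occ2 (s : seq nat) x : 1 < count_mem x s ->
  exists i j, i < j < size s /\ nth 0 s i = x /\ nth 0 s j = x.
Proof.
elim: s => [//|y s IH] /=.
have [->|ne] := eqVneq y x.
- move=> h.
  have xs : x \in s by rewrite -has_pred1 has_count; rewrite ?eqxx add1n ltnS in h.
  exists 0, (index x s).+1; split; last split=> //=.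
  + by rewrite /= ltnS index_mem.
  + by rewrite nth_index.
- rewrite add0n => /IH [i [j [h [E1 E2]]]].
  by exists i.+1, j.+1; split; [|split].
Qed.

Lemma uniq_of_count n c : size c = n -> count_mem n c = 1 -> kc n c 0 = n ->
  forall i, 0 < i < n -> kc n c i != n.
Proof.
move=> sz C H i hi; apply/eqP => E.
have E0 : nth 0 c 0 = n by move: H; rewrite /kc mod0n.
have E1 : nth 0 c i = n by move: E; rewrite /kc modn_small //; lia.
have := two_occ (s := c) (i := 0) (j := i) (x := n) (ltac:(by rewrite sz)) E0 E1.
by rewrite C.
Qed.

Lemma count0_inf n c : 0 < n -> goodK n c -> count_mem n c = 0 -> ~ finite_gldim n c.
Proof.
move=> n0 [sz [H1 H2]] C [d Hd].
have ne : forall i, kc n c i != n.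
  move=> i; apply/eqP => E; move/count_memPn: C => /negP; apply.
  rewrite -E /kc; apply: mem_nth; rewrite sz; exact: ltn_pmod.
pose Q (M : nat * nat) := M.1 < n /\ (M.2 = n \/ M.2 = kc n c M.1 - n).
have HQ : forall M, Q M -> exists M', syz n c M = Some M' /\ Q M'.
  case=> i l [/= hi [->|->]]; rewrite /syz /=.
  - have := H1 i; have := ne i; move=> /eqP a b.
    have -> : n < kc n c i by lia.
    eexists; split; first reflexivity.
    by rewrite /= modnDr modn_small //; split=> //; right.
  - have := H1 i => b. have -> : kc n c i - n < kc n c i by lia.
    eexists; split; first reflexivity.
    split; first exact: ltn_pmod. left => /=; lia.
have HM : indec n c (0, n) by split=> //=; split=> //.
have [M' [E _]] := omega_inf HQ (M := (0, n)) (conj n0 (or_introl erefl)) d.+1.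
by have := Hd _ HM; rewrite /pdim_le E.
Qed.

Lemma count2_inf n c : 0 < n -> goodK n c -> 1 < count_mem n c -> ~ finite_gldim n c.
Proof.
move=> n0 [sz [H1 H2]] C [d Hd].
have [p [q [hpq [Ep Eq]]]] := occ2 C.
rewrite sz in hpq.
have kp : kc n c p = n by rewrite /kc modn_small //; lia.
have kq : kc n c q = n by rewrite /kc modn_small //; lia.
pose Q (M : nat * nat) := M = (p, q - p) \/ M = (q, n - (q - p)).
have HQ : forall M, Q M -> exists M', syz n c M = Some M' /\ Q M'.
  case=> i l [[-> ->]|[-> ->]]; rewrite /syz /=.
  - rewrite kp; have -> : q - p < n by lia.
    eexists; split; first reflexivity. right.
    rewrite subnKC; last lia. rewrite modn_small //; lia.
  - rewrite kq; have -> : n - (q - p) < n by lia.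
    eexists; split; first reflexivity. left.
    have -> : q + (n - (q - p)) = p + n by lia.
    rewrite modnDr modn_small; last lia. congr (_, _); lia.
have HM : indec n c (p, q - p) by split=> /=; lia.
have [M' [E _]] := omega_inf HQ (M := (p, q - p)) (or_introl erefl) d.+1.
by have := Hd _ HM; rewrite /pdim_le E.
Qed.

Lemma count1_fin n c : 0 < n -> goodK n c -> count_mem n c = 1 -> finite_gldim n c.
Proof.
move=> n0 g C; have sz : size c = n by case: g.
have mem : n \in c by rewrite -has_pred1 has_count C.
set p := index n c.
have pn : p < n by rewrite -sz index_mem.
have g' := goodK_rot n0 pn g.
have H0 : kc n (rot p c) 0 = n.
  by rewrite kc_rot // add0n /kc modn_small // nth_index.
have U : forall i, 0 < i < n -> kc n (rot p c) i != n.
  apply: uniq_of_count => //; [by rewrite size_rot | by rewrite count_rot].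
have := main_gldim n0 g' H0 U => -[Hg _].
by exists (2 * Tf n (rot p c) 1); apply/(gldim_rot _ n0 sz pn).
Qed.

Lemma part1 n c : 0 < n -> goodK n c -> (finite_gldim n c <-> count_mem n c = 1).
Proof.
move=> n0 g; split; last exact: count1_fin.
move=> F; case: (ltngtP (count_mem n c) 1) => // h.
- by exfalso; apply: (count0_inf n0 g) => //; lia.
- by exfalso; exact: (count2_inf n0 g h).
Qed.

Definition dn (p : seq bool) x := count negb (take x p).
Definition up (p : seq bool) x := count id (take x p).

Lemma count_id_negb (s : seq bool) : count id s + count negb s = size s.
Proof. elim: s => //= b s IH; case: b => /=; lia. Qed.

Lemma dn_up p x : x <= size p -> dn p x + up p x = x.
Proof.
move=> h; rewrite /dn /up addnC count_id_negb size_take.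
case: ltnP => //; lia.
Qed.

Lemma dn_step p x : x < size p -> dn p x.+1 = dn p x + ~~ nth false p x.
Proof. by move=> h; rewrite /dn (take_nth false h) -cats1 count_cat /= addn0. Qed.

Lemma dn_stepS p x : dn p x.+1 <= (dn p x).+1.
Proof.
case: (ltnP x (size p)) => h; first by rewrite dn_step //; case: (nth false p x) => /=; lia.
by rewrite /dn !take_oversize //; lia.
Qed.

Lemma dn_mono p x y : x <= y -> dn p x <= dn p y.
Proof.
move: x y; apply: (@homo_leq nat (dn p) leq) => [//|a b c|i]; first exact: leq_trans.
case: (ltnP i (size p)) => h; first by rewrite dn_step // leq_addr.
by rewrite /dn !take_oversize //; lia.
Qed.

Lemma dn0 p : dn p 0 = 0.
Proof. by rewrite /dn take0. Qed.

Lemma dyck_size m p : dyck m p -> size p = 2 * m.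
Proof. by case. Qed.

Lemma dyck_dn2 m p x : dyck m p -> x <= 2 * m -> 2 * dn p x <= x.
Proof.
move=> [sz [H _]] xm; have := H x xm; have := dn_up (p := p) (x := x).
rewrite sz /dn /up => /(_ xm); lia.
Qed.

Lemma dyck_dnm m p : dyck m p -> dn p (2 * m) = m.
Proof.
move=> [sz [_ E]]; rewrite /dn -sz take_size.
have := count_id_negb p; rewrite sz E; lia.
Qed.

Lemma dyck_dn_le m p x : dyck m p -> dn p x <= m.
Proof.
move=> D; case: (leqP x (2 * m)) => h.
- by rewrite -(dyck_dnm D) dn_mono.
- have -> : dn p x = dn p (2 * m) by rewrite /dn !take_oversize // (dyck_size D); lia.
  by rewrite (dyck_dnm D).
Qed.

Lemma on_path_dn m p k t : dyck m p -> 1 <= t ->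
  on_path p (2 * k + t - 1) (t - 1) = (2 * k + t - 1 <= 2 * m) && (dn p (2 * k + t - 1) == k).
Proof.
move=> D t1; rewrite /on_path /height (dyck_size D).
case: (leqP (2 * k + t - 1) (2 * m)) => h //=.
have := dyck_dn2 D h; have := dn_up (p := p) (x := 2 * k + t - 1).
rewrite (dyck_size D) => /(_ h); rewrite /dn /up => e1 e2.
by apply/eqP/eqP; lia.
Qed.

Lemma max_eq N (P : pred nat) v : 1 <= v < N -> P v ->
  (forall t, 1 <= t < N -> P t -> t <= v) -> \max_(1 <= t < N | P t) t = v.
Proof.
move=> hv Pv H; apply/eqP; rewrite eqn_leq; apply/andP; split.
- apply/bigmax_leqP_seq => t; rewrite mem_index_iota; exact: H.
- by apply: (leq_bigmax_seq (F := id)); rewrite ?mem_index_iota.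
Qed.

Lemma max_ge N (P : pred nat) t : 1 <= t < N -> P t -> t <= \max_(1 <= t < N | P t) t.
Proof. by move=> h Pt; apply: (leq_bigmax_seq (F := id)); rewrite ?mem_index_iota. Qed.

Lemma max_att N (P : pred nat) t : 1 <= t < N -> P t ->
  let v := \max_(1 <= t < N | P t) t in 1 <= v < N /\ P v.
Proof.
move=> ht Pt v.
have : v = 0 \/ (1 <= v < N /\ P v).
  rewrite /v big_seq_cond; apply: (big_ind (fun x => x = 0 \/ (1 <= x < N /\ P x))).
  - by left.
  - by move=> x y Kx Ky; case: (leqP x y).
  - by move=> i /andP [hi Pi]; right; rewrite -mem_index_iota.
case=> // v0; have := max_ge ht Pt; rewrite -/v v0; lia.
Qed.

Definition Amax (p : seq bool) m k :=
  \max_(1 <= t < (2 * m).+2 | on_path p (2 * k + t - 1) (t - 1)) t.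

Lemma size_area p : size (area_seq p) = (size p %/ 2).+1.
Proof. by rewrite /area_seq size_map size_iota. Qed.

Lemma nth_area m p k : size p = 2 * m -> k <= m -> nth 0 (area_seq p) k = Amax p m k.
Proof.
move=> sz km; rewrite /area_seq sz mulKn // (nth_map 0); last by rewrite size_iota.
by rewrite nth_iota // add0n.
Qed.

Lemma ivt (f : nat -> nat) N k : f 0 = 0 -> (forall x, f x.+1 <= (f x).+1) ->
  k <= f N -> exists2 x, x <= N & f x = k.
Proof.
move=> f0 fS; elim: N => [|N IH] h.
- by exists 0 => //; move: h; rewrite f0; lia.
- case: (leqP k (f N)) => h'.
  + by case: (IH h') => x xN fx; exists x => //; lia.
  + by exists N.+1 => //; have := fS N; lia.
Qed.

Lemma attained m p k : dyck m p -> k <= m ->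
  1 <= Amax p m k /\ 2 * k + Amax p m k - 1 <= 2 * m /\ dn p (2 * k + Amax p m k - 1) = k.
Proof.
move=> D km.
have [x xm dx] := ivt (f := dn p) (N := 2 * m) (k := k) (dn0 p) (@dn_stepS p)
  (ltac:(by rewrite (dyck_dnm D))).
have x2 := dyck_dn2 D xm; rewrite dx in x2.
have Pt : on_path p (2 * k + (x - 2 * k + 1) - 1) ((x - 2 * k + 1) - 1).
  rewrite (@on_path_dn m p k _ D) //; last lia.
  have -> : 2 * k + (x - 2 * k + 1) - 1 = x by lia.
  by rewrite xm dx eqxx.
have := max_att (N := (2 * m).+2) (P := fun t => on_path p (2 * k + t - 1) (t - 1)) (ltac:(lia) : 1 <= x - 2 * k + 1 < (2 * m).+2) Pt.
rewrite -/(Amax p m k) => -[hr]; rewrite (@on_path_dn m p k _ D) //; last lia.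
move=> /andP [h1 /eqP h2]; lia.
Qed.

Lemma bound m p k x : dyck m p -> x <= 2 * m -> dn p x = k -> x <= 2 * k + Amax p m k - 1.
Proof.
move=> D xm dx; have x2 := dyck_dn2 D xm; rewrite dx in x2.
have Pt : on_path p (2 * k + (x - 2 * k + 1) - 1) ((x - 2 * k + 1) - 1).
  rewrite (@on_path_dn m p k _ D) //; last lia.
  have -> : 2 * k + (x - 2 * k + 1) - 1 = x by lia.
  by rewrite xm dx eqxx.
have := max_ge (N := (2 * m).+2) (P := fun t => on_path p (2 * k + t - 1) (t - 1)) (ltac:(lia) : 1 <= x - 2 * k + 1 < (2 * m).+2) Pt.
rewrite -/(Amax p m k); lia.
Qed.

Lemma area_uniq m p q : dyck m p -> dyck m q -> area_seq p = area_seq q -> p = q.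
Proof.
move=> Dp Dq E.
have Hle : forall p q, dyck m p -> dyck m q -> area_seq p = area_seq q ->
    forall x, x <= 2 * m -> dn q x <= dn p x.
  clear E Dp Dq; move=> p1 q1 Dp Dq E x xm.
  set k := dn p1 x.
  have km : k <= m := dyck_dn_le x Dp.
  have hb := bound Dp xm (erefl k).
  have EA : Amax p1 m k = Amax q1 m k.
    by rewrite -(nth_area (dyck_size Dp) km) -(nth_area (dyck_size Dq) km) E.
  have [_ [h1 h2]] := attained Dq km.
  rewrite -EA in h1 h2.
  by rewrite -[X in _ <= X]h2; apply: dn_mono.
have Heq : forall x, x <= 2 * m -> dn p x = dn q x.
  by move=> x xm; apply/eqP; rewrite eqn_leq Hle // Hle.
apply: (eq_from_nth (x0 := false)); first by rewrite (dyck_size Dp) (dyck_size Dq).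
move=> i; rewrite (dyck_size Dp) => hi.
have := Heq i.+1 hi; rewrite !dn_step ?(dyck_size Dp) ?(dyck_size Dq) // Heq; last lia.
by case: (nth false p i); case: (nth false q i) => /=; lia.
Qed.

Definition area_ok m (a : seq nat) := size a = m.+1 /\ nth 0 a m = 1 /\
  forall k, k < m -> 2 <= nth 0 a k /\ nth 0 a k <= nth 0 a k.+1 + 1.

Lemma area_ok_of m p : dyck m p -> area_ok m (area_seq p).
Proof.
move=> D; have sz := dyck_size D.
split; first by rewrite size_area sz mulKn.
split.
- rewrite (nth_area sz (leqnn m)) /Amax; apply: max_eq.
  + lia.
  + rewrite (@on_path_dn m p m 1 D) //.
    have -> : 2 * m + 1 - 1 = 2 * m by lia.
    by rewrite leqnn (dyck_dnm D) eqxx.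
  + move=> t ht; rewrite (@on_path_dn m p m t D); last lia.
    move=> /andP [h _]; lia.
- move=> k km; rewrite !(nth_area sz) //; try lia.
  have [a1 [aX dX]] := @attained m p k D (ltnW km).
  set a := Amax p m k in a1 aX dX *.
  set X := 2 * k + a - 1 in aX dX.
  have Xlt : X < 2 * m.
    have : X != 2 * m by apply/eqP => e; move: dX; rewrite e (dyck_dnm D); lia.
    lia.
  have hnth : nth false p X = false.
    apply/negP => hx.
    have dX1 : dn p X.+1 = k by rewrite dn_step ?sz // hx dX addn0.
    have := @bound m p k X.+1 D Xlt dX1; rewrite -/a; lia.
  have dX1 : dn p X.+1 = k.+1 by rewrite dn_step ?sz // hnth dX addn1.
  have := @dyck_dn2 m p X.+1 D Xlt; rewrite dX1 => h2.
  have := @bound m p k.+1 X.+1 D Xlt dX1.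
  lia.
Qed.

Lemma count_split (f : nat -> nat) x s :
  count (fun k => f k < x.+1) s = count (fun k => f k < x) s + count (fun k => f k == x) s.
Proof.
elim: s => //= y s ->; case: (ltngtP (f y) x) => h /=.
- have -> : f y < x.+1 by lia. lia.
- have -> : f y < x.+1 = false by lia. lia.
- rewrite h ltnSn; lia.
Qed.

Lemma cnt_lt k m : count (fun j => j < k) (iota 0 m) = minn k m.
Proof.
elim: m => [|m IH]; first by rewrite minn0.
rewrite -addn1 iotaD count_cat IH /= add0n addn0.
case: (ltnP m k) => h; lia.
Qed.

Lemma sub_in_count' (T : eqType) (a1 a2 : pred T) (s : seq T) :
  {in s, forall x, a1 x -> a2 x} -> count a1 s <= count a2 s.
Proof.
elim: s => //= y s IH H.
have := IH (fun x xs => H x (ltac:(by rewrite in_cons xs orbT))).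
move: (H y (mem_head y s)); case: (a1 y); case: (a2 y) => //= hy; try lia.
Qed.

Lemma area_exists m a : area_ok m a -> exists p, dyck m p /\ area_seq p = a.
Proof.
move=> [sa [am H]].
pose X k := nth 0 a k + 2 * k - 1.
have Xinc : forall k, k < m -> X k < X k.+1 by move=> k km; have := H k km; rewrite /X; lia.
have Xm : X m = 2 * m by rewrite /X am; lia.
have Xge : forall k, k < m -> 2 * k + 1 <= X k by move=> k km; have := H k km; rewrite /X; lia.
have Xlt : forall j k, j < k -> k <= m -> X j < X k.
  move=> j; elim=> [//|k IH] jk km.
  rewrite ltnS leq_eqVlt in jk; case/orP: jk => [/eqP ->|jk]; first exact: Xinc.
  have := IH jk (ltnW km); have := Xinc k km; lia.
have Xle : forall j k, j <= k -> k <= m -> X j <= X k.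
  move=> j k; rewrite leq_eqVlt => /orP [/eqP ->//|jk] km.
  exact: ltnW (Xlt _ _ jk km).
pose Xs := map X (iota 0 m).
pose p := [seq i \notin Xs | i <- iota 0 (2 * m)].
have sp : size p = 2 * m by rewrite size_map size_iota.
have np : forall i, i < 2 * m -> nth false p i = (i \notin Xs).
  by move=> i hi; rewrite (nth_map 0) ?size_iota // nth_iota.
pose N x := count (fun k => X k < x) (iota 0 m).
have uXs : uniq Xs.
  rewrite map_inj_in_uniq ?iota_uniq // => i j; rewrite !mem_iota !add0n => hi hj E.
  apply/eqP; rewrite eqn_leq; apply/andP; split; rewrite leqNgt; apply/negP => h.
  - have := Xlt _ _ h (ltac:(lia)); lia.
  - have := Xlt _ _ h (ltac:(lia)); lia.
have NS : forall x, N x.+1 = N x + (x \in Xs).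
  move=> x; rewrite /N count_split -count_uniq_mem // count_map.
  done.
have dnN : forall x, x <= 2 * m -> dn p x = N x.
  elim=> [|x IH] hx.
  - by rewrite dn0 /N; elim: (iota 0 m) => //= k s <-; rewrite ltn0.
  - rewrite dn_step ?sp; last lia.
    rewrite IH; last lia.
    by rewrite NS np ?negbK //; lia.
have NX : forall k, k <= m -> N (X k) = k.
  move=> k km; rewrite /N (eq_in_count (a2 := fun j => j < k)).
  - rewrite cnt_lt; lia.
  - move=> j; rewrite mem_iota add0n => /andP [_ jm] /=.
    apply/idP/idP => h.
    + rewrite ltnNge; apply/negP => kj; have := Xle k j kj (ltnW jm); lia.
    + exact: Xlt.
have Ngt : forall k x, k < m -> X k < x -> k.+1 <= N x.
  move=> k x km hx.
  have : minn k.+1 m = k.+1 by lia.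
  move=> <-; rewrite -cnt_lt /N; apply: sub_in_count' => j.
  rewrite mem_iota add0n => /andP [_ jm] /= jk.
  have := Xle j k (ltac:(lia)) (ltnW km); lia.
have N2 : forall x, x <= 2 * m -> 2 * N x <= x.
  move=> x xm.
  have jm : N x <= m by rewrite /N; apply: (leq_trans (count_size _ _)); rewrite size_iota.
  case E: (N x) => [//|j].
  have hj : X j < x.
    rewrite ltnNge; apply/negP => hxj.
    have : N x <= j.
      rewrite /N; apply: (leq_trans (sub_in_count' (a2 := fun i => i < j) _)).
      + move=> i; rewrite mem_iota add0n => /andP [_ im] /= hi.
        rewrite ltnNge; apply/negP => ji; have := Xle j i ji (ltnW im); lia.
      + apply: (leq_trans (eq_leq (cnt_lt j m))); exact: geq_minl.
    lia.
  have := Xge j (ltac:(lia)); lia.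
have dyckp : dyck m p.
  split; first done. split.
  - move=> j jm; have e := @dn_up p j (ltac:(by rewrite sp)).
    change (dn p j <= up p j).
    have := N2 j jm; rewrite -dnN //; lia.
  - have e := count_id_negb p.
    have : count negb p = m.
      have := dnN (2 * m) (leqnn _); rewrite /dn -sp take_size sp -Xm NX //.
    rewrite sp in e; lia.
exists p; split=> //.
apply: (eq_from_nth (x0 := 0)); first by rewrite size_area sp mulKn // sa.
move=> k; rewrite size_area sp mulKn // => km.
rewrite (nth_area sp) //.
have ak : 1 <= nth 0 a k.
  case: (ltnP k m) => h; first by have := H k h; lia.
  have -> : k = m by lia. by rewrite am.
have XkE : 2 * k + nth 0 a k - 1 = X k by rewrite /X; lia.
have Xk2 : X k <= 2 * m by rewrite -Xm; apply: Xle; lia.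
rewrite /Amax; apply: max_eq.
- move: Xk2; rewrite /X; lia.
- rewrite (@on_path_dn m p k _ dyckp) // XkE Xk2 dnN // NX //; lia.
- move=> t ht; rewrite (@on_path_dn m p k t dyckp); last lia.
  move=> /andP [hx /eqP hd]; rewrite dnN // in hd.
  rewrite leqNgt; apply/negP => tgt.
  case: (ltnP k m) => km'.
  + have := Ngt k (2 * k + t - 1) km' (ltac:(rewrite /X; lia)); lia.
  + have e : k = m by lia.
    subst k; move: Xm hx tgt; rewrite /X; lia.
Qed.

Lemma bounce_T n c D : 0 < n -> goodK n c -> kc n c 0 = n ->
  (forall i, 0 < i < n -> kc n c i != n) -> size D = 2 * n.-1 ->
  area_seq D = nak_to_area n c -> bounce_count D = Tf n c 1.
Proof.
move=> n0 g H U sz E.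
have sc : size c = n by case: g.
rewrite /bounce_count; cbv zeta; rewrite sz mulKn // E prednK // /Tf.
apply: eq_find => d.
suff [h1 h2] : iter d (Gf n c) 1 = (iter d (bounce_step (nak_to_area n c)) 0).+1 /\
    iter d (bounce_step (nak_to_area n c)) 0 <= n.-1.
  by rewrite h1; apply/eqP/eqP; lia.
elim: d => [|d [IH1 IH2]] /=; first by split => //; lia.
set b := iter d (bounce_step _) 0 in IH1 IH2 *.
rewrite IH1 /bounce_step /nak_to_area nth_cat size_map size_behead sc.
case: ltnP => hb.
- rewrite (nth_map 0) ?size_behead ?sc // nth_behead.
  have kb : kc n c b.+1 = nth 0 c b.+1 by rewrite /kc modn_small //; lia.
  have kge : n <= kc n c b.+1 by case: g => _ [].
  have gl := G_le g H (x := b.+1) (ltac:(lia)).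
  move: gl kge; rewrite /Gf kb; lia.
- have eb : b = n.-1 by lia.
  rewrite eb subnn /=.
  have := G_n H; rewrite prednK //; lia.
Qed.

Theorem theorem4p7 (n : nat) : 0 < n ->
  (* finite global dimension iff exactly one c_i equals n *)
  (forall c, nakayama n c -> sincere n c ->
     (finite_gldim n c <-> count_mem n c = 1%N)) /\
  (* every class has a rotation with c_0 = n *)
  (forall c, nakayama n c -> sincere n c -> finite_gldim n c ->
     exists k, k < n /\ nth 0 (rot k c) 0 = n) /\
  (* the map to Dyck paths of semilength n-1 is well defined (unique D) *)
  (forall c, normalized n c ->
     exists D, dyck n.-1 D /\ area_seq D = nak_to_area n c /\
       forall D', dyck n.-1 D' -> area_seq D' = nak_to_area n c -> D' = D) /\
  (* it is constant on isomorphism classes *)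
  (forall c c', normalized n c -> normalized n c' -> nak_iso n c c' ->
     nak_to_area n c = nak_to_area n c') /\
  (* injective on isomorphism classes *)
  (forall c c', normalized n c -> normalized n c' ->
     nak_to_area n c = nak_to_area n c' -> nak_iso n c c') /\
  (* surjective onto Dyck paths of semilength n-1 *)
  (forall D, dyck n.-1 D -> exists c, normalized n c /\ area_seq D = nak_to_area n c) /\
  (* gldim A = 2 * bounce count *)
  (forall c k D, nakayama n c -> sincere n c -> finite_gldim n c ->
     k < n -> nth 0 (rot k c) 0 = n ->
     dyck n.-1 D -> area_seq D = nak_to_area n (rot k c) ->
     is_gldim n c (2 * bounce_count D)).
Proof.
move=> n0.
have P1 : forall c, nakayama n c -> sincere n c -> (finite_gldim n c <-> count_mem n c = 1).
  by move=> c Hn Hs; exact: part1 n0 (good_of Hn Hs).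
have NORM : forall c, normalized n c ->
    [/\ goodK n c, count_mem n c = 1, nth 0 c 0 = n & size c = n].
  move=> c [Hn [Hs [Hf H0]]]; have g := good_of Hn Hs.
  split => //; [exact/(P1 c Hn Hs) | by case: g].
have AREA : forall c, normalized n c -> area_ok n.-1 (nak_to_area n c).
  move=> c Nc; have [g C H0 sc] := NORM c Nc.
  have kge : forall i, n <= kc n c i by case: g => _ [].
  have kle : forall i, kc n c i <= kc n c i.+1 + 1 by case: g => _ [].
  have U := uniq_of_count sc C (ltac:(by rewrite /kc mod0n)).
  have kcE : forall i, i < n -> kc n c i = nth 0 c i by move=> i hi; rewrite /kc modn_small.
  have nth_a : forall i, i < n.-1 -> nth 0 (nak_to_area n c) i = nth 0 c i.+1 - n.-1.
    move=> i hi; rewrite /nak_to_area nth_cat size_map size_behead sc hi.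
    by rewrite (nth_map 0) ?size_behead ?sc // nth_behead.
  split; first by rewrite /nak_to_area size_cat size_map size_behead sc addn1 prednK.
  split; first by rewrite /nak_to_area nth_cat size_map size_behead sc ltnn subnn.
  move=> k kn.
  have e1 := kge k.+1; have e2 := U k.+1 (ltac:(lia)); rewrite kcE in e1 e2; last lia.
  have e3 := kle k.+1; rewrite (kcE k.+1) in e3; last lia.
  rewrite nth_a //.
  case: (leqP n.-1 k.+1) => h.
  - have ek : k.+1 = n.-1 by lia.
    rewrite ek /nak_to_area nth_cat size_map size_behead sc ltnn subnn /=.
    move: e3; rewrite -ek.
    have -> : kc n c k.+2 = n.
      rewrite (_ : k.+2 = n); last lia. by rewrite kc_n /kc mod0n.
    move: e2 => /eqP e2 e3; split; lia.
  - rewrite nth_a //.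
    have e4 := kge k.+2; rewrite (kcE k.+2) in e3 e4; lia.
split; first exact: P1.
split.
  move=> c Hn Hs Hf; have C := (P1 c Hn Hs).1 Hf.
  have g := good_of Hn Hs; have sz : size c = n by case: g.
  have memn : n \in c by rewrite -has_pred1 has_count C.
  have hi : index n c < n by move: memn; rewrite -index_mem sz.
  exists (index n c); split => //.
  rewrite nth_rot_mod ?sz; [|lia|lia].
  by rewrite addn0 modn_small // nth_index.
split.
  move=> c Nc; have [D [DD DA]] := area_exists (AREA c Nc).
  exists D; split => //; split => //.
  move=> D' DD' DA'; apply: area_uniq DD' DD _; by rewrite DA DA'.
split.
  move=> c c' Nc Nc' [k [kn Ec]]; subst c'.
  have [g C H0 sc] := NORM c Nc; have [_ _ H0' _] := NORM (rot k c) Nc'.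
  have k0 : k = 0.
    apply/eqP; rewrite -leqn0 leqNgt; apply/negP => kp.
    have E1 : nth 0 c k = n by move: H0'; rewrite nth_rot_mod ?sc; [rewrite addn0 modn_small|lia|lia].
    have := two_occ (s := c) (i := 0) (j := k) (x := n) (ltac:(rewrite sc; lia)) H0 E1.
    by rewrite C.
  by rewrite k0 rot0.
split.
  move=> c c' Nc Nc' E.
  have [g C H0 sc] := NORM c Nc; have [g' C' H0' sc'] := NORM c' Nc'.
  exists 0; split => //; rewrite rot0.
  have Em : [seq x - n.-1 | x <- behead c] = [seq x - n.-1 | x <- behead c'].
    by move: E; rewrite /nak_to_area !cats1 => /rcons_inj [] .
  apply: (eq_from_nth (x0 := 0)); first by rewrite sc sc'.
  move=> i; rewrite sc' => hi; case: i hi => [|i] hi; first by rewrite H0 H0'.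
  have := congr1 (fun s => nth 0 s i) Em => /=.
  rewrite !(nth_map 0) ?size_behead ?sc ?sc'; [|lia|lia].
  rewrite !nth_behead.
  have e1 : n <= kc n c i.+1 by case: g => _ [].
  have e2 : n <= kc n c' i.+1 by case: g' => _ [].
  move: e1 e2; rewrite /kc !modn_small //; lia.
split.
  move=> D DD; have [sa [am Hk]] := area_ok_of DD.
  set a := area_seq D in sa am Hk *.
  pose c := n :: [seq x + n.-1 | x <- take n.-1 a].
  have sc : size c = n.
    by rewrite /= size_map size_take sa ltnSn prednK.
  have nc0 : nth 0 c 0 = n by [].
  have nci : forall i, 0 < i < n -> nth 0 c i = nth 0 a i.-1 + n.-1.
    move=> i hi; case: i hi => [//|i] hi /=.
    rewrite (nth_map 0) ?nth_take //; [lia|].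
    by rewrite size_take sa ltnSn; lia.
  have kcE : forall i, i < n -> kc n c i = nth 0 c i by move=> i hi; rewrite /kc modn_small.
  have areaE : a = nak_to_area n c.
    rewrite /nak_to_area /= -map_comp (eq_map (g := id)); last by move=> x /=; rewrite addnK.
    rewrite map_id -{1}(cat_take_drop n.-1 a).
    congr cat.
    rewrite (drop_nth 0); last by rewrite sa; lia.
    by rewrite am drop_oversize // sa; lia.
  have kgen : forall i, i < n -> n <= kc n c i.
    move=> i hi; rewrite kcE //; case: i hi => [//|i] hi.
    rewrite nci /=; last lia.
    have := Hk i (ltac:(lia)); lia.
  have Hn : nakayama n c.
    split => //.
    case: (ltnP 1 n) => n1.
    - left; split => // i hi.
      split; first by have := kgen i hi; lia.
      rewrite kcE //.
      case: (ltnP i.+1 n) => h.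
      + rewrite kcE //.
        case: i hi h => [|i] hi h.
        * rewrite nc0 nci //; have := Hk 0 (ltac:(lia)); lia.
        * rewrite !nci //; have := Hk i (ltac:(lia)); rewrite /= ; lia.
      + have ei : i.+1 = n by lia.
        rewrite ei /kc modnn -/(nth 0 c 0) nc0.
        case: i hi h ei => [|i] hi h ei; first lia.
        rewrite nci //= -ei /=.
        have := Hk i (ltac:(lia)).
        have -> : i.+1 = n.-1 by lia.
        rewrite am; lia.
    - right; have n1' : n = 1 by lia.
      split => //; split; last by rewrite n1'.
      by rewrite n1' /=.
  have Hs : sincere n c.
    move=> i j hi hj; exists ((j + n - i) %% n); split.
    - apply: (leq_trans (ltn_pmod _ n0)); exact: kgen.
    - rewrite modnDmr (_ : i + (j + n - i) = j + n); last lia.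
      by rewrite modnDr modn_small.
  have C : count_mem n c = 1.
    rewrite /= eqxx count_map (eq_in_count (a2 := pred0)) ?count_pred0 //.
    move=> x xin /=; apply/negbTE.
    move: xin => /(nthP 0) [k]; rewrite size_take sa ltnSn => kn <-.
    rewrite nth_take //; apply/eqP; move: (Hk k kn) => [hv _]; move: hv; move: (nth 0 a k) => v hv; lia.
  exists c; split => //.
  split => //; split => //; split => //; exact/(P1 c Hn Hs).
move=> c k D Hn Hs Hf kn Hk0 DD DA.
have g := good_of Hn Hs; have C := (P1 c Hn Hs).1 Hf.
have sz : size c = n by case: g.
have g' := goodK_rot n0 kn g.
have H0 : kc n (rot k c) 0 = n by rewrite /kc mod0n.
have U : forall i, 0 < i < n -> kc n (rot k c) i != n.
  apply: uniq_of_count => //; [by rewrite size_rot | by rewrite count_rot].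
have := main_gldim n0 g' H0 U.
rewrite -(bounce_T n0 g' H0 U (dyck_size DD) DA).
exact: is_gldim_rot n0 sz kn.
Qed.
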